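(* Let $\nu_1,\nu_2>0$ and $\alpha,\beta\ge 0$ be real numbers. Let $X$ and $Y$ be independent random variables with values in $\mathbb{N}=\{0,1,2,\dots\}$ such that $P(X=x)=f(x)>0$ and $P(Y=y)=g(y)>0$ for all $x,y\in\mathbb{N}$. Suppose that for every $s\in\mathbb{N}$, the conditional distribution of $X$ given $X+Y=s$ is the extended negative hypergeometric distribution $\mathrm{ENHG}(s,\nu_1,\nu_2,\alpha,\beta)$, i.e. $$P(X=k\mid X+Y=s)=\frac{\{\Gamma(\nu_1+k)\Gamma(\nu_2+s-k)\}^\beta}{[k!(s-k)!]^\alpha}\Big/ E(s,\nu_1,\nu_2,\alpha,\beta),\qquad k=0,1,\dots,s,$$ where $E(s,\nu_1,\nu_2,\alpha,\beta)=\sum_{x=0}^s \frac{\{\Gamma(\nu_1+x)\Gamma(\nu_2+s-x)\}^\beta}{[x!(s-x)!]^\alpha}$. Then there exists $p>0$ such that $X\sim \mathrm{ECOMP}(\nu_1,p,\alpha,\beta)$ and $Y\sim\mathrm{ECOMP}(\nu_2,p,\alpha,\beta)$, i.e. $$P(X=x)=P(X=0)\frac{[\Gamma(\nu_1+x)]^\beta}{[\Gamma(\nu_1)]^\beta (x!)^\alpha}p^x,\qquad P(Y=y)=P(Y=0)\frac{[\Gamma(\nu_2+y)]^\beta}{[\Gamma(\nu_2)]^\beta (y!)^\alpha}p^y$$ for all $x,y\in\mathbb{N}$.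
   Context: A random variable $X$ follows the extended COM-Poisson distribution $\mathrm{ECOMP}(\nu,p,\alpha,\beta)$ if $$P(X=k)=\frac{[\Gamma(\nu+k)]^\beta}{[\Gamma(\nu)]^\beta (k!)^\alpha}\,p^k\cdot\frac{1}{S(\nu,p,\alpha,\beta)},\qquad k=0,1,2,\dots,$$ where $S(\nu,p,\alpha,\beta)=\sum_{k=0}^\infty \frac{[\Gamma(\nu+k)]^\beta}{[\Gamma(\nu)]^\beta (k!)^\alpha}p^k$ is the (finite) normalizing constant; the parameter space is $(\nu\ge0,p>0,\alpha>\beta\ge0)\cup(\nu>0,0<p<1,\alpha=\beta\ge0)$. *)

(* Defs.v *)
From Stdlib Require Import Reals Factorial.
From Coquelicot Require Import Coquelicot.
Open Scope R_scope.

Definition Gamma (x : R) : R :=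
  RInt_gen (fun t => Rpower t (x - 1) * exp (- t)) (at_right 0) (Rbar_locally p_infty).

Definition enhg_weight (s : nat) (nu1 nu2 alpha beta : R) (k : nat) : R :=
  Rpower (Gamma (nu1 + INR k) * Gamma (nu2 + INR (s - k)%nat)) beta
  / Rpower (INR (fact k) * INR (fact (s - k)%nat)) alpha.

Definition enhg_norm (s : nat) (nu1 nu2 alpha beta : R) : R :=
  sum_f_R0 (enhg_weight s nu1 nu2 alpha beta) s.

Definition enhg_pmf (s : nat) (nu1 nu2 alpha beta : R) (k : nat) : R :=
  enhg_weight s nu1 nu2 alpha beta k / enhg_norm s nu1 nu2 alpha beta.

Definition ecomp_weight (nu p alpha beta : R) (x : nat) : R :=
  Rpower (Gamma (nu + INR x)) beta
  / (Rpower (Gamma nu) beta * Rpower (INR (fact x)) alpha) * p ^ x.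

(* For independent N-valued X, Y with pmfs f, g, the conditional probability
   P(X = k | X + Y = s) = P(X=k) P(Y=s-k) / sum_{j=0}^s P(X=j) P(Y=s-j). *)
Definition cond_prob_given_sum (f g : nat -> R) (s k : nat) : R :=
  f k * g (s - k)%nat / sum_f_R0 (fun j => f j * g (s - j)%nat) s.

(* Main.v *)
Require Import Defs.
From Stdlib Require Import Reals Factorial Lra Lia.
From Coquelicot Require Import Coquelicot.
Open Scope R_scope.


Lemma RInt_mono_interval (F : R -> R) a b a0 b0 :
  (forall t, 0 < t -> continuous F t) -> (forall t, 0 < t -> 0 <= F t) ->
  0 < a -> a <= a0 -> a0 <= b0 -> b0 <= b ->
  RInt F a0 b0 <= RInt F a b.
Proof.
  intros HC HP Ha H1 H2 H3.
  assert (EX : forall u v, 0 < u -> u <= v -> ex_RInt F u v).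
  { intros u v Hu Huv. apply (@ex_RInt_continuous R_CompleteNormedModule). intros z Hz.
    apply HC. rewrite Rmin_left in Hz by lra. lra. }
  assert (NN : forall u v, 0 < u -> u <= v -> 0 <= RInt F u v).
  { intros u v Hu Huv. apply RInt_ge_0; auto. intros; apply HP; lra. }
  rewrite <- (RInt_Chasles F a a0 b) by (apply EX; lra).
  rewrite <- (RInt_Chasles F a0 b0 b) by (apply EX; lra).
  unfold plus; simpl.
  pose proof (NN a a0 ltac:(lra) H1). pose proof (NN b0 b ltac:(lra) H3). lra.
Qed.

Lemma improper_pos (F : R -> R) (M : R) :
  (forall t, 0 < t -> continuous F t) -> (forall t, 0 < t -> 0 <= F t) ->
  (forall a b, 0 < a -> a <= b -> RInt F a b <= M) ->
  0 < RInt F 1 2 ->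
  0 < RInt_gen F (at_right 0) (Rbar_locally p_infty).
Proof.
  intros HC HP HM H12.
  set (S := fun y => exists a b, 0 < a /\ a <= b /\ y = RInt F a b).
  assert (Hb : bound S).
  { exists M. intros y [a [b [Ha [Hab ->]]]]. apply HM; auto. }
  assert (Hne : exists y, S y).
  { exists (RInt F 1 2). exists 1, 2. repeat split; lra. }
  destruct (completeness S Hb Hne) as [l [Hub Hlub]].
  assert (Hl : RInt F 1 2 <= l).
  { apply Hub. exists 1, 2. repeat split; lra. }
  assert (EX : forall u v, 0 < u -> u <= v -> ex_RInt F u v).
  { intros u v Hu Huv. apply (@ex_RInt_continuous R_CompleteNormedModule). intros z Hz.
    apply HC. rewrite Rmin_left in Hz by lra. lra. }
  assert (HI : is_RInt_gen F (at_right 0) (Rbar_locally p_infty) l).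
  { apply (filterlimi_lim_ext_loc (fun ab : R * R => RInt F (fst ab) (snd ab))).
    - exists (fun a => 0 < a < 1) (fun b => 1 < b).
      + exists (mkposreal 1 Rlt_0_1). intros y Hy Hy0.
        unfold ball in Hy; simpl in Hy; unfold AbsRing_ball, abs, minus, plus, opp in Hy; simpl in Hy.
        apply Rabs_def2 in Hy. lra.
      + exists 1. auto.
      + intros a b Ha Hb'. simpl. apply (@RInt_correct R_CompleteNormedModule). apply EX; lra.
    - apply filterlim_locally. intros eps.
      assert (Hex : exists y, S y /\ l - eps < y).
      { apply Classical_Pred_Type.not_all_not_ex. intros Hn.
        assert (l <= l - eps).
        { apply Hlub. intros y Sy. destruct (Rle_dec y (l - eps)); auto.
          exfalso. apply (Hn y). split; auto; lra. }
        pose proof (cond_pos eps). lra. }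
      destruct Hex as [y [[a0 [b0 [Ha0 [Hab0 ->]]]] Hy]].
      exists (fun a => 0 < a <= a0) (fun b => b0 <= b).
      + exists (mkposreal a0 Ha0). intros y Hy' Hy0.
        unfold ball in Hy'; simpl in Hy'; unfold AbsRing_ball, abs, minus, plus, opp in Hy'; simpl in Hy'.
        apply Rabs_def2 in Hy'. lra.
      + exists b0. intros; lra.
      + intros a b Ha Hb'. simpl.
        pose proof (RInt_mono_interval F a b a0 b0 HC HP ltac:(lra) ltac:(lra) Hab0 Hb').
        assert (RInt F a b <= l). { apply Hub. exists a, b. repeat split; lra. }
        unfold ball; simpl; unfold AbsRing_ball, abs, minus, plus, opp; simpl.
        apply Rabs_def1; lra. }
  rewrite (is_RInt_gen_unique F l HI). lra.
Qed.


Lemma ln_le_sub1 y : 0 < y -> ln y <= y - 1.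
Proof.
  intro Hy. pose proof (exp_ineq1_le (y - 1)).
  rewrite <- (ln_exp (y - 1)). apply ln_le; lra.
Qed.

Section G.
Variable x : R.
Hypothesis Hx : 0 < x.
Let F := fun t => Rpower t (x - 1) * exp (- t).

Lemma F_cont t : 0 < t -> continuous F t.
Proof.
  intro Ht. unfold F, Rpower. apply (@ex_derive_continuous R_AbsRing R_NormedModule). auto_derive. lra.
Qed.

Lemma F_pos t : 0 <= F t.
Proof. unfold F, Rpower. pose proof (exp_pos ((x-1) * ln t)). pose proof (exp_pos (-t)). nra. Qed.

Lemma near0 a : 0 < a -> a <= 1 -> RInt F a 1 <= 1 / x.
Proof.
  intros Ha Ha1.
  set (P := fun t => Rpower t (x - 1)).
  assert (HD : is_RInt P a 1 (minus (Rpower 1 x / x) (Rpower a x / x))).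
  { apply (@is_RInt_derive R_CompleteNormedModule (fun t => Rpower t x / x) P).
    - intros t Ht. rewrite Rmin_left in Ht by lra. unfold P, Rpower.
      auto_derive; [lra|].
      replace ((x-1) * ln t) with (x * ln t + - ln t) by ring.
      rewrite exp_plus, exp_Ropp, exp_ln by lra. field. split; lra.
    - intros t Ht. rewrite Rmin_left in Ht by lra. unfold P, Rpower.
      apply (@ex_derive_continuous R_AbsRing R_NormedModule). auto_derive. lra. }
  assert (EP : ex_RInt P a 1) by (eexists; exact HD).
  assert (EF : ex_RInt F a 1).
  { apply (@ex_RInt_continuous R_CompleteNormedModule). intros z Hz.
    rewrite Rmin_left in Hz by lra. apply F_cont. lra. }
  apply Rle_trans with (RInt P a 1).
  - apply RInt_le; auto. intros t Ht. unfold F, P.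
    assert (exp (- t) <= 1). { rewrite <- exp_0. left. apply exp_increasing. lra. }
    assert (0 < Rpower t (x - 1)) by (unfold Rpower; apply exp_pos). nra.
  - rewrite (is_RInt_unique _ _ _ _ HD). unfold minus, plus, opp; simpl.
    assert (Rpower 1 x = 1) by (unfold Rpower; rewrite ln_1, Rmult_0_r, exp_0; auto).
    assert (0 < Rpower a x) by (unfold Rpower; apply exp_pos).
    rewrite H. unfold Rdiv. assert (0 < / x) by (apply Rinv_0_lt_compat; lra). nra.
Qed.

Let N := 2 * Rabs (x - 1) + 2.
Let c := Rabs (x - 1) * Rabs (ln N - 1).

Lemma exponent_bound t : 1 <= t -> (x - 1) * ln t - t <= c - t / 2.
Proof.
  intro Ht.
  assert (HN : 0 < N) by (unfold N; pose proof (Rabs_pos (x-1)); lra).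
  assert (Hl0 : 0 <= ln t) by (rewrite <- ln_1; apply ln_le; lra).
  assert (Hl1 : ln t <= ln N + t / N - 1).
  { replace t with (N * (t / N)) at 1 by (field; lra).
    rewrite ln_mult by (try apply Rdiv_lt_0_compat; lra).
    pose proof (ln_le_sub1 (t / N) ltac:(apply Rdiv_lt_0_compat; lra)). lra. }
  assert (Hc : 0 <= c) by (unfold c; apply Rmult_le_pos; apply Rabs_pos).
  destruct (Rle_dec (x - 1) 0) as [Hneg|Hpos].
  - assert ((x-1) * ln t <= 0) by nra. lra.
  - assert (Hxa : Rabs (x - 1) = x - 1) by (apply Rabs_right; lra).
    assert (H1 : (x - 1) * (ln N - 1) <= c).
    { unfold c. rewrite <- Rabs_mult. apply Rle_abs. }
    assert (H2 : (x - 1) * (t / N) <= t / 2).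
    { unfold N in *. rewrite Hxa in *. unfold Rdiv.
      apply Rmult_le_reg_r with (2 * (x - 1) + 2); [lra|].
      field_simplify; [|lra]. nra. }
    assert ((x - 1) * ln t <= (x - 1) * (ln N + t / N - 1)) by (apply Rmult_le_compat_l; lra).
    lra.
Qed.

Lemma far b : 1 <= b -> RInt F 1 b <= 2 * exp c.
Proof.
  intros Hb.
  set (P := fun t => exp c * exp (- t / 2)).
  assert (HD : is_RInt P 1 b (minus (-2 * exp c * exp (- b / 2)) (-2 * exp c * exp (- 1 / 2)))).
  { apply (@is_RInt_derive R_CompleteNormedModule (fun t => -2 * exp c * exp (- t / 2)) P).
    - intros t Ht. unfold P. auto_derive; [auto|]. unfold Rdiv. generalize (exp c) (exp (-t * /2)). intros. field.
    - intros t Ht. unfold P.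
      apply (@ex_derive_continuous R_AbsRing R_NormedModule). auto_derive. auto. }
  assert (EP : ex_RInt P 1 b) by (eexists; exact HD).
  assert (EF : ex_RInt F 1 b).
  { apply (@ex_RInt_continuous R_CompleteNormedModule). intros z Hz.
    rewrite Rmin_left in Hz by lra. apply F_cont. lra. }
  apply Rle_trans with (RInt P 1 b).
  - apply RInt_le; auto. intros t Ht. unfold F, P, Rpower.
    rewrite <- !exp_plus. 
    pose proof (exponent_bound t ltac:(lra)).
    destruct (Rle_lt_or_eq_dec _ _ (Rle_trans _ _ _ H (Req_le _ _ eq_refl))) as [Hlt|Heq].
    + left. apply exp_increasing. lra.
    + right. f_equal. lra.
  - rewrite (is_RInt_unique _ _ _ _ HD). unfold minus, plus, opp; simpl.
    pose proof (exp_pos c). pose proof (exp_pos (- b / 2)). pose proof (exp_pos (-1/2)).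
    assert (exp (-1/2) <= 1) by (rewrite <- exp_0; left; apply exp_increasing; lra).
    nra.
Qed.

Lemma Gamma_pos : 0 < Gamma x.
Proof.
  unfold Gamma. fold F.
  assert (EX : forall u v, 0 < u -> u <= v -> ex_RInt F u v).
  { intros u v Hu Huv. apply (@ex_RInt_continuous R_CompleteNormedModule). intros z Hz.
    apply F_cont. rewrite Rmin_left in Hz by lra. lra. }
  apply (improper_pos F (1 / x + 2 * exp c)).
  - exact F_cont.
  - intros; apply F_pos.
  - intros a b Ha Hab.
    assert (Hm : 0 < Rmin a 1) by (apply Rmin_glb_lt; lra).
    pose proof (Rmin_l a 1). pose proof (Rmin_r a 1). pose proof (Rmax_l b 1). pose proof (Rmax_r b 1).
    eapply Rle_trans.
    + apply (RInt_mono_interval F (Rmin a 1) (Rmax b 1) a b F_cont (fun t _ => F_pos t)); lra.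
    + rewrite <- (RInt_Chasles F (Rmin a 1) 1 (Rmax b 1)) by (apply EX; lra).
      unfold plus; simpl.
      pose proof (near0 (Rmin a 1) Hm ltac:(lra)). pose proof (far (Rmax b 1) ltac:(lra)). lra.
  - apply RInt_gt_0; [lra| |].
    + intros t Ht. unfold F, Rpower. pose proof (exp_pos ((x-1) * ln t)). pose proof (exp_pos (-t)). nra.
    + intros t Ht. apply F_cont. lra.
Qed.
End G.




Section Alg.
Variables (f g a1 a2 c : nat -> R).
Hypotheses (Hf : forall x, 0 < f x) (Hg : forall x, 0 < g x)
  (Ha1 : forall x, 0 < a1 x) (Ha2 : forall x, 0 < a2 x).
Hypothesis H : forall s k, (k <= s)%nat -> f k * g (s - k)%nat = c s * a1 k * a2 (s - k)%nat.

Definition pp := g 1%nat * a2 0%nat / (g 0%nat * a2 1%nat).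

Lemma pp_pos : 0 < pp.
Proof.
  unfold pp. pose proof (Hg 1%nat); pose proof (Hg 0%nat); pose proof (Ha2 0%nat); pose proof (Ha2 1%nat).
  apply Rdiv_lt_0_compat; apply Rmult_lt_0_compat; auto.
Qed.

Lemma f_form x : f x = f 0%nat * (a1 x / a1 0%nat) * pp ^ x.
Proof.
  induction x as [|x IH].
  - simpl. pose proof (Ha1 0%nat). field. lra.
  - pose proof (H (S x) (S x) (le_n _)) as E1.
    pose proof (H (S x) x (le_S _ _ (le_n _))) as E2.
    replace (S x - S x)%nat with 0%nat in E1 by lia.
    replace (S x - x)%nat with 1%nat in E2 by lia.
    assert (Hfx : f (S x) = f x * pp * (a1 (S x) / a1 x)).
    { unfold pp.
      pose proof (Hg 1%nat); pose proof (Hg 0%nat); pose proof (Ha2 0%nat); pose proof (Ha2 1%nat);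
      pose proof (Ha1 x); pose proof (Ha1 (S x)).
      apply (Rmult_eq_reg_r (g 0%nat)); [|lra]. rewrite E1.
      replace (f x * (g 1%nat * a2 0%nat / (g 0%nat * a2 1%nat)) * (a1 (S x) / a1 x) * g 0%nat)
        with ((f x * g 1%nat) * a2 0%nat * a1 (S x) / (a2 1%nat * a1 x)) by (field; lra).
      rewrite E2. field. lra. }
    rewrite Hfx, IH. simpl. pose proof (Ha1 x). pose proof (Ha1 0%nat). field. lra.
Qed.

Lemma g_form y : g y = g 0%nat * (a2 y / a2 0%nat) * pp ^ y.
Proof.
  assert (Hq : f 1%nat * a1 0%nat / (f 0%nat * a1 1%nat) = pp).
  { pose proof (H 1 1 (le_n _)) as E1. pose proof (H 1 0 (le_S _ _ (le_n _))) as E2.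
    simpl in E1, E2.
    pose proof (Hg 1%nat); pose proof (Hg 0%nat); pose proof (Ha2 0%nat); pose proof (Ha2 1%nat);
    pose proof (Hf 1%nat); pose proof (Hf 0%nat); pose proof (Ha1 0%nat); pose proof (Ha1 1%nat).
    unfold pp.
    assert (Hc : c 1%nat = f 0%nat * g 1%nat / (a1 0%nat * a2 1%nat)) by (rewrite E2; field; lra).
    apply (Rmult_eq_reg_r (f 0%nat * a1 1%nat * (g 0%nat * a2 1%nat))); [|apply Rmult_integral_contrapositive; split; apply Rmult_integral_contrapositive; split; lra].
    replace (f 1%nat * a1 0%nat / (f 0%nat * a1 1%nat) * (f 0%nat * a1 1%nat * (g 0%nat * a2 1%nat)))
      with ((f 1%nat * g 0%nat) * a1 0%nat * a2 1%nat) by (field; lra).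
    rewrite E1, Hc. field. lra. }
  induction y as [|y IH].
  - simpl. pose proof (Ha2 0%nat). field. lra.
  - pose proof (H (S y) 0 (le_0_n _)) as E1.
    pose proof (H (S y) 1 (le_n_S _ _ (le_0_n _))) as E2.
    replace (S y - 0)%nat with (S y) in E1 by lia.
    replace (S y - 1)%nat with y in E2 by lia.
    assert (Hgy : g (S y) = g y * pp * (a2 (S y) / a2 y)).
    { rewrite <- Hq.
      pose proof (Hf 1%nat); pose proof (Hf 0%nat); pose proof (Ha1 0%nat); pose proof (Ha1 1%nat);
      pose proof (Ha2 y); pose proof (Ha2 (S y)).
      apply (Rmult_eq_reg_l (f 0%nat)); [|lra]. rewrite E1.
      replace (f 0%nat * (g y * (f 1%nat * a1 0%nat / (f 0%nat * a1 1%nat)) * (a2 (S y) / a2 y)))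
        with ((f 1%nat * g y) * a1 0%nat * a2 (S y) / (a1 1%nat * a2 y)) by (field; lra).
      rewrite E2. field. lra. }
    rewrite Hgy, IH. simpl. pose proof (Ha2 y). pose proof (Ha2 0%nat). field. lra.
Qed.
End Alg.

Lemma sum_pos (h : nat -> R) n : (forall i, 0 < h i) -> 0 < sum_f_R0 h n.
Proof.
  intro Hh. induction n as [|n IH]; simpl; [apply Hh|]. pose proof (Hh (S n)). lra.
Qed.

Lemma Rpower_1_l a : Rpower 1 a = 1.
Proof. unfold Rpower. rewrite ln_1, Rmult_0_r. apply exp_0. Qed.

Theorem theoremB (nu1 nu2 alpha beta : R) (f g : nat -> R) :
  0 < nu1 -> 0 < nu2 -> 0 <= alpha -> 0 <= beta ->
  (* f, g are pmfs on N with full support: f x = P(X=x), g y = P(Y=y) *)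
  (forall x, 0 < f x) -> (forall y, 0 < g y) ->
  is_series f 1 -> is_series g 1 ->
  (* X | X+Y=s ~ ENHG(s,nu1,nu2,alpha,beta) for all s, X and Y independent *)
  (forall s k : nat, (k <= s)%nat ->
     cond_prob_given_sum f g s k = enhg_pmf s nu1 nu2 alpha beta k) ->
  exists p : R, 0 < p /\
    (forall x : nat, f x = f 0%nat * ecomp_weight nu1 p alpha beta x) /\
    (forall y : nat, g y = g 0%nat * ecomp_weight nu2 p alpha beta y).
Proof.
  intros Hn1 Hn2 Hal Hbe Hf Hg _ _ Hc.
  set (A := fun nu k => Rpower (Gamma (nu + INR k)) beta / Rpower (INR (fact k)) alpha).
  assert (Apos : forall nu k, 0 < A nu k).
  { intros nu k. unfold A, Rpower. apply Rdiv_lt_0_compat; apply exp_pos. }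
  assert (A0 : forall nu, A nu 0%nat = Rpower (Gamma nu) beta).
  { intro nu. unfold A. simpl INR. rewrite Rplus_0_r. simpl fact. rewrite Rpower_1_l. field. }
  assert (Wfac : forall s k, enhg_weight s nu1 nu2 alpha beta k = A nu1 k * A nu2 (s - k)%nat).
  { intros s k. unfold enhg_weight, A.
    pose proof (pos_INR k). pose proof (pos_INR (s - k)).
    rewrite <- Rpower_mult_distr by (apply Gamma_pos; lra).
    rewrite <- Rpower_mult_distr by (apply INR_fact_lt_0).
    assert (0 < Rpower (INR (fact k)) alpha) by (unfold Rpower; apply exp_pos).
    assert (0 < Rpower (INR (fact (s - k))) alpha) by (unfold Rpower; apply exp_pos).
    field. lra. }
  set (c := fun s => sum_f_R0 (fun j => f j * g (s - j)%nat) s / enhg_norm s nu1 nu2 alpha beta).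
  assert (HH : forall s k, (k <= s)%nat -> f k * g (s - k)%nat = c s * A nu1 k * A nu2 (s - k)%nat).
  { intros s k Hks. pose proof (Hc s k Hks) as E.
    unfold cond_prob_given_sum, enhg_pmf in E. unfold c.
    assert (HS : 0 < sum_f_R0 (fun j => f j * g (s - j)%nat) s).
    { apply sum_pos. intro i. apply Rmult_lt_0_compat; auto. }
    assert (HE : 0 < enhg_norm s nu1 nu2 alpha beta).
    { unfold enhg_norm. apply sum_pos. intro i. rewrite Wfac. apply Rmult_lt_0_compat; auto. }
    rewrite Wfac in E.
    apply (Rmult_eq_reg_r (/ sum_f_R0 (fun j => f j * g (s - j)%nat) s)).
    2: { apply Rgt_not_eq, Rinv_0_lt_compat; auto. }
    unfold Rdiv in E. rewrite E. field. split; lra. }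
  exists (pp g (A nu2)). split; [|split].
  - unfold pp. pose proof (Hg 1%nat); pose proof (Hg 0%nat); pose proof (Apos nu2 0%nat); pose proof (Apos nu2 1%nat).
    apply Rdiv_lt_0_compat; apply Rmult_lt_0_compat; auto.
  - intro x. rewrite (f_form f g (A nu1) (A nu2) c) at 1; auto.
    unfold ecomp_weight. rewrite A0. unfold A at 1.
    assert (0 < Rpower (Gamma nu1) beta) by (unfold Rpower; apply exp_pos).
    assert (0 < Rpower (INR (fact x)) alpha) by (unfold Rpower; apply exp_pos).
    field. lra.
  - intro y. rewrite (g_form f g (A nu1) (A nu2) c) at 1; auto.
    unfold ecomp_weight. rewrite A0. unfold A at 1.
    assert (0 < Rpower (Gamma nu2) beta) by (unfold Rpower; apply exp_pos).
    assert (0 < Rpower (INR (fact y)) alpha) by (unfold Rpower; apply exp_pos).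
    field. lra.
Qed.
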